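(* Let $R>0$ and let $f\colon\mathbb{R}\to(0,\infty)$ be a continuously differentiable convex function. Put $\alpha(t)=\dfrac{tf'(t)-f(t)}{\sqrt{1+f'(t)^2}}$ and $C^+=\{t>0\mid\alpha(t)\ge R\}$. If $t_0\in C^+$, then $\alpha(t)\ge\alpha(t_0)$ for every $t>t_0$; in particular $t\in C^+$ for every $t>t_0$. *)

(* Defs.v *)
From Stdlib Require Import Reals.
From Coquelicot Require Import Coquelicot.
Open Scope R_scope.

Definition is_C1 (f : R -> R) : Prop :=
  (forall x, ex_derive f x) /\ (forall x, continuous (Derive f) x).

Definition convex_fun (f : R -> R) : Prop :=
  forall x y l, 0 <= l <= 1 -> f (l * x + (1 - l) * y) <= l * f x + (1 - l) * f y.

Definition alpha (f : R -> R) (t : R) : R :=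
  (t * Derive f t - f t) / sqrt (1 + (Derive f t) ^ 2).

Definition Cplus_set (Rad : R) (f : R -> R) (t : R) : Prop :=
  0 < t /\ alpha f t >= Rad.

(* Main.v *)
Require Import Defs.
From Stdlib Require Import Reals Lra Psatz.
From Coquelicot Require Import Coquelicot.
Open Scope R_scope.

Lemma tangent (f : R -> R) x y l :
  convex_fun f -> derivable_pt_lim f x l -> f y >= f x + l * (y - x).
Proof.
  intros hconv Hl.
  destruct (Req_dec y x) as [->|Hne]; [lra|].
  apply Rle_ge, Rnot_lt_le; intro H.
  set (d := y - x) in *.
  assert (Hd0 : d <> 0) by (unfold d; lra).
  assert (Had : 0 < Rabs d) by (apply Rabs_pos_lt; auto).
  set (e := (f x + l * d - f y) / (2 * Rabs d)).
  assert (He : 0 < e) by (unfold e; apply Rdiv_lt_0_compat; lra).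
  destruct (Hl e He) as [delta Hdel].
  set (lam := Rmin 1 (delta / (2 * Rabs d))).
  assert (Hdp : 0 < delta) by (destruct delta; auto).
  assert (Hl1 : lam <= 1) by apply Rmin_l.
  assert (Hl2 : lam <= delta / (2 * Rabs d)) by apply Rmin_r.
  assert (Hl0 : 0 < lam).
  { unfold lam; apply Rmin_pos; [lra|apply Rdiv_lt_0_compat; lra]. }
  assert (Hld : lam * d <> 0) by (apply Rmult_integral_contrapositive; split; lra).
  assert (Habs : Rabs (lam * d) < delta).
  { rewrite Rabs_mult, (Rabs_right lam) by lra.
    apply Rmult_le_compat_r with (r := Rabs d) in Hl2; [|lra].
    replace (delta / (2 * Rabs d) * Rabs d) with (delta / 2) in Hl2 by (field; lra).
    lra. }
  specialize (Hdel (lam * d) Hld Habs).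
  pose proof (hconv y x lam (conj (Rlt_le _ _ Hl0) Hl1)) as Hc.
  replace (lam * y + (1 - lam) * x) with (x + lam * d) in Hc by (unfold d; ring).
  set (Q := (f (x + lam * d) - f x) / (lam * d)) in *.
  assert (HQ : f (x + lam * d) - f x = Q * lam * d) by (unfold Q; field; split; lra).
  assert (HQd : Q * d > l * d - e * Rabs d).
  { assert (Rabs (Q * d - l * d) < e * Rabs d).
    { replace (Q * d - l * d) with ((Q - l) * d) by ring.
      rewrite Rabs_mult. apply Rmult_lt_compat_r; auto. }
    apply Rabs_def2 in H0. lra. }
  assert (Hee : e * Rabs d = (f x + l * d - f y) / 2) by (unfold e; field; lra).
  assert (Q * d <= f y - f x).
  { apply Rmult_le_reg_l with lam; [lra|]. nra. }
  lra.
Qed.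

Theorem lemma3 (Rad : R) (f : R -> R)
  (hR : 0 < Rad) (hpos : forall x, 0 < f x) (hC1 : is_C1 f) (hconv : convex_fun f)
  (t0 : R) (ht0 : Cplus_set Rad f t0) :
  forall t, t > t0 -> alpha f t >= alpha f t0 /\ Cplus_set Rad f t.
Proof.
  intros t Ht.
  destruct hC1 as [hd _].
  assert (D : forall z, derivable_pt_lim f z (Derive f z)).
  { intro z. apply is_derive_Reals. apply Derive_correct. apply hd. }
  destruct ht0 as [Ht0 Ha0].
  set (p := Derive f t) in *. set (q := Derive f t0) in *.
  pose proof (tangent f t t0 p hconv (D t)) as T1.
  pose proof (tangent f t0 t q hconv (D t0)) as T2.
  fold p q in T1, T2.
  assert (Hpq : p >= q) by nra.
  pose proof (hpos t0) as F0.
  assert (Sq : 0 < sqrt (1 + q ^ 2)) by (apply sqrt_lt_R0; nra).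
  assert (Sp : 0 < sqrt (1 + p ^ 2)) by (apply sqrt_lt_R0; nra).
  assert (A0 : 0 < t0 * q - f t0).
  { unfold alpha in Ha0; fold q in Ha0.
    assert (0 < (t0 * q - f t0) / sqrt (1 + q ^ 2)) by lra.
    apply Rmult_lt_compat_r with (r := sqrt (1 + q ^ 2)) in H; [|lra].
    rewrite Rmult_0_l in H. unfold Rdiv in H.
    rewrite Rmult_assoc, Rinv_l in H by lra. lra. }
  assert (Hq : 0 < q) by nra.
  set (b := f t0) in *. set (a := t0) in *.
  assert (K : (a * p - b) * sqrt (1 + q ^ 2) >= (a * q - b) * sqrt (1 + p ^ 2)).
  { assert (Hsq : ((a * p - b) * sqrt (1 + q ^ 2)) ^ 2 >= ((a * q - b) * sqrt (1 + p ^ 2)) ^ 2).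
    { rewrite !Rpow_mult_distr, !pow2_sqrt by nra.
      assert (E : (a * p - b) ^ 2 * (1 + q ^ 2) - (a * q - b) ^ 2 * (1 + p ^ 2)
                  = (p - q) * ((a * p - b) * (a + b * q) + (a * q - b) * (a + b * p))) by ring.
      assert (0 <= (p - q) * ((a * p - b) * (a + b * q) + (a * q - b) * (a + b * p))).
      { apply Rmult_le_pos; [lra|].
        assert (0 <= b * q) by (apply Rmult_le_pos; lra).
        assert (0 <= b * p) by (apply Rmult_le_pos; lra).
        assert (a * q <= a * p) by (apply Rmult_le_compat_l; lra).
        apply Rplus_le_le_0_compat; apply Rmult_le_pos; lra. }
      lra. }
    assert (0 <= (a * q - b) * sqrt (1 + p ^ 2)) by (apply Rmult_le_pos; lra).
    assert (0 <= (a * p - b) * sqrt (1 + q ^ 2)) by (apply Rmult_le_pos; [assert (a * q <= a * p) by (apply Rmult_le_compat_l; lra); lra | lra]).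
    set (X := (a * p - b) * sqrt (1 + q ^ 2)) in *.
    set (Y := (a * q - b) * sqrt (1 + p ^ 2)) in *.
    nra. }
  assert (Main : alpha f t >= alpha f t0).
  { unfold alpha; fold a; fold b; fold p; fold q.
    apply Rle_ge.
    apply Rle_trans with ((a * p - b) / sqrt (1 + p ^ 2)).
    - unfold Rdiv. apply Rmult_le_reg_r with (sqrt (1 + q ^ 2) * sqrt (1 + p ^ 2)).
      { nra. }
      replace ((a * q - b) * / sqrt (1 + q ^ 2) * (sqrt (1 + q ^ 2) * sqrt (1 + p ^ 2)))
        with ((a * q - b) * sqrt (1 + p ^ 2)) by (field; lra).
      replace ((a * p - b) * / sqrt (1 + p ^ 2) * (sqrt (1 + q ^ 2) * sqrt (1 + p ^ 2)))
        with ((a * p - b) * sqrt (1 + q ^ 2)) by (field; lra).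
      lra.
    - unfold Rdiv. apply Rmult_le_compat_r.
      + left; apply Rinv_0_lt_compat; lra.
      + assert (E2 : t * p - f t - (a * p - b) = (f a - (f t + p * (a - t)))) by (unfold b; ring). lra. }
  split; [exact Main|]. split; [lra|]. change t0 with a in Main. lra.
Qed.
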